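(* Let $K:[0,1]\times\mathbb{R}^n\to\mathbb{R}^n$ and $g:[0,1]\to\mathbb{R}^n$ be continuous, and let $X=C([0,1],\mathbb{R}^n)$ with the supremum norm $\|\cdot\|_\infty$. Let $f:[0,\infty)\to(0,\infty)$ be a Lebesgue integrable mapping which is summable (finite integral on each compact subset of $[0,\infty)$) and such that $\int_0^{\varepsilon} f(\lambda)\,d\lambda>0$ for each $\varepsilon>0$. Suppose there exist $\alpha\in(0,\tfrac12]$, $\psi\in\Psi$, $\varphi\in\Phi_u$ and $F\in\mathcal{C}$ such that for all $x,y\in X$ and $t\in[0,1]$, the inequality $\alpha\,\big|x(t)-g(t)-\int_0^t K(s,x(s))\,ds\big|\le |x(t)-y(t)|$ implies $$\psi\Big(\int_0^{|K(t,x(t))-K(t,y(t))|} f(\lambda)\,d\lambda\Big)\le F\Big(\psi\Big(\int_0^{|x(t)-y(t)|} f(\lambda)\,d\lambda\Big),\ \varphi\Big(\int_0^{|x(t)-y(t)|} f(\lambda)\,d\lambda\Big)\Big).$$ Then the integral equation $x(t)=g(t)+\int_0^t K(s,x(s))\,ds$, $t\in[0,1]$, has a unique solution $x\in X$.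
   Context: A $C$-class function is a continuous function $F:[0,\infty)^2\to\mathbb{R}$ such that for all $s,t\in[0,\infty)$: (1) $F(s,t)\le s$; (2) $F(s,t)=s$ implies $s=0$ or $t=0$. $\mathcal{C}$ denotes the class of all $C$-class functions. $\Phi_u$ denotes the class of functions $\varphi:[0,\infty)\to[0,\infty)$ that are continuous, satisfy $\varphi(t)>0$ for $t>0$, and $\varphi(0)\ge 0$. $\Psi$ denotes the set of functions $\psi:[0,\infty)\to[0,\infty)$ that are continuous and strictly increasing with $\psi(t)=0$ if and only if $t=0$. *)

(* Defs.v *)
From HB Require Import structures.
From mathcomp Require Import all_boot all_order all_algebra.
From mathcomp Require Import all_classical all_reals all_analysis.
Set Implicit Arguments. Unset Strict Implicit. Unset Printing Implicit Defensive.
Import Order.TTheory GRing.Theory Num.Theory.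
Import numFieldNormedType.Exports.
Local Open Scope classical_set_scope.
Local Open Scope ring_scope.

Section Defs.
Variable R : realType.

Definition enorm (n : nat) (v : 'rV[R]_n) : R :=
  Num.sqrt (\sum_(i < n) (v ord0 i) ^+ 2).

Definition rint (h : R -> R) (a b : R) : R :=
  Rintegral (@lebesgue_measure R) `[a, b] h.

Definition vint (n : nat) (h : R -> 'rV[R]_n) (a b : R) : 'rV[R]_n :=
  \row_(i < n) rint (fun s => h s ord0 i) a b.

Definition C_class (F : R -> R -> R) : Prop :=
  {within [set p : R * R | 0 <= p.1 /\ 0 <= p.2], continuous (fun p => F p.1 p.2)} /\
  (forall s t, 0 <= s -> 0 <= t -> F s t <= s) /\
  (forall s t, 0 <= s -> 0 <= t -> F s t = s -> s = 0 \/ t = 0).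

Definition Phi_u (phi : R -> R) : Prop :=
  {within [set t : R | 0 <= t], continuous phi} /\
  (forall t, 0 <= t -> 0 <= phi t) /\
  (forall t, 0 < t -> 0 < phi t) /\ 0 <= phi 0.

Definition Psi_class (psi : R -> R) : Prop :=
  {within [set t : R | 0 <= t], continuous psi} /\
  (forall t, 0 <= t -> 0 <= psi t) /\
  (forall s t, 0 <= s -> s < t -> psi s < psi t) /\
  (forall t, 0 <= t -> (psi t = 0 <-> t = 0)).

End Defs.

(* Main.v *)
Require Import Defs.
From HB Require Import structures.
From mathcomp Require Import all_boot all_order all_algebra.
From mathcomp Require Import all_classical all_reals all_analysis.
From mathcomp Require Import ring lra.
Import Order.TTheory GRing.Theory Num.Theory.
Import numFieldNormedType.Exports.
Local Open Scope classical_set_scope.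
Local Open Scope ring_scope.
Section Norms.
Variable R : realType.
Variable n : nat.
Implicit Types v : 'rV[R]_n.

Lemma coord_le_norm v i : `|v ord0 i| <= `|v|.
Proof.
by rewrite [leRHS]/Num.norm /= mx_normrE; apply/bigmax_geP; right => /=; exists (ord0, i).
Qed.

Lemma norm_le_coord v c : 0 <= c -> (forall i, `|v ord0 i| <= c) -> `|v| <= c.
Proof.
move=> c0 H; rewrite [leLHS]/Num.norm /= mx_normrE; apply/bigmax_leP; split => //.
by move=> [i j] _ /=; rewrite (ord1 i); exact: H.
Qed.

Lemma norm_le_enorm v : `|v| <= enorm v.
Proof.
apply: norm_le_coord; first exact: sqrtr_ge0.
move=> i; rewrite /enorm -sqrtr_sqr ler_sqrt; last by apply: sumr_ge0 => j _; exact: sqr_ge0.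
by rewrite (bigD1 i) //= lerDl; apply: sumr_ge0 => j _; exact: sqr_ge0.
Qed.

Lemma enorm_le v : enorm v <= (n%:R + 1) * `|v|.
Proof.
rewrite /enorm -(ger0_norm (_ : 0 <= (n%:R + 1) * `|v|)); last first.
  by rewrite mulr_ge0 // addr_ge0.
rewrite -sqrtr_sqr ler_sqrt; last exact: sqr_ge0.
apply: (@le_trans _ _ (\sum_(i < n) `|v| ^+ 2)).
  apply: ler_sum => i _; rewrite -real_normK ?num_real //.
  by rewrite lerXn2r ?nnegrE ?coord_le_norm.
rewrite sumr_const card_ord -[_ *+ n]mulr_natl exprMn.
apply: ler_wpM2r; first exact: sqr_ge0.
have h : 0 <= n%:R :> R := ler0n _ _.
nra.
Qed.

Lemma enorm_ge0 v : 0 <= enorm v.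
Proof. exact: sqrtr_ge0. Qed.

End Norms.
Section Key.
Variable R : realType.
Variable f : R -> R.
Hypothesis fpos : forall l, 0 <= l -> 0 < f l.
Hypothesis fint : forall a, 0 <= a -> (@lebesgue_measure R).-integrable `[0, a] (EFin \o f).

Lemma rint_ge0 d : 0 <= d -> 0 <= rint f 0 d.
Proof.
move=> d0; apply: Rintegral_ge0 => x /=; rewrite in_itv /= => /andP[x0 _].
exact/ltW/fpos.
Qed.

Lemma rint_mono d e : 0 <= d -> d <= e -> rint f 0 d <= rint f 0 e.
Proof.
move=> d0 de; rewrite /rint.
rewrite [in X in _ <= X](@itv_bndbnd_setU _ _ _ (BRight d)) ?bnd_simp //.
rewrite Rintegral_setU //=.
- rewrite lerDl; apply: Rintegral_ge0 => x /=; rewrite in_itv /= => /andP[x0 _].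
  by apply/ltW/fpos; rewrite ltW // (le_lt_trans d0 x0).
- rewrite -(@itv_bndbnd_setU _ _ _ (BRight d)) ?bnd_simp //.
  exact: fint (le_trans d0 de).
- apply/disj_set2P; rewrite -subset0 => z/=; rewrite !in_itv/= => -[/andP[_]].
  by rewrite leNgt => /negbTE ->.
Qed.

Variables (psi phi : R -> R) (F : R -> R -> R).
Hypothesis fpos2 : forall e, 0 < e -> 0 < rint f 0 e.
Hypothesis hpsi : Psi_class psi.
Hypothesis hphi : Phi_u phi.
Hypothesis hF : C_class F.

Lemma key_ineq d e : 0 <= d -> 0 <= e ->
  psi (rint f 0 e) <= F (psi (rint f 0 d)) (phi (rint f 0 d)) -> e <= d.
Proof.
move: hpsi hphi hF => [_ [psi0 [psiinc psieq]]] [_ [phi0 [phipos _]]] [_ [Fle Feq]].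
move=> d0 e0 H.
have Ad0 := @rint_ge0 d d0; have Ae0 := @rint_ge0 e e0.
have psimono : forall a b, 0 <= a -> a <= b -> psi a <= psi b.
  move=> a b a0; rewrite le_eqVlt => /predU1P[-> //|ab].
  exact/ltW/psiinc.
rewrite leNgt; apply/negP => de.
have Ade := @rint_mono d e d0 (ltW de).
have H2 := le_trans H (Fle _ _ (psi0 _ Ad0) (phi0 _ Ad0)).
have H3 := psimono _ _ Ad0 Ade.
have Heq : F (psi (rint f 0 d)) (phi (rint f 0 d)) = psi (rint f 0 d).
  apply/eqP; rewrite eq_le Fle ?psi0 ?phi0 //=.
  exact: le_trans H3 H.
have [d0'|d0'] := eqVneq d 0.
  have A0 : rint f 0 d = 0 by rewrite d0' /rint set_itv1 Rintegral_set1.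
  have ep : 0 < e by rewrite -d0'.
  have : psi (rint f 0 d) < psi (rint f 0 e) by apply: psiinc => //; rewrite A0 fpos2.
  by rewrite ltNge H2.
have dp : 0 < d by rewrite lt_neqAle eq_sym d0' d0.
have Adp := fpos2 _ dp.
case: (Feq _ _ (psi0 _ Ad0) (phi0 _ Ad0) Heq) => /eqP; apply/negP.
- by rewrite gt_eqF // (le_lt_trans (psi0 _ (lexx 0)) (psiinc _ _ (lexx 0) Adp)).
- by rewrite gt_eqF // phipos.
Qed.

End Key.
Section Cont.

Lemma wc_comp {T U V : topologicalType} {A : set T} {h : T -> U} {k : U -> V} :
  {within A, continuous h} -> continuous k -> {within A, continuous (k \o h)}.
Proof.
move=> /subspace_continuousP hc kc; apply/subspace_continuousP => x Ax.
move: (hc x Ax); rewrite /from_subspace /= => hcx; exact: (cvg_comp _ _ hcx (kc (h x))).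
Qed.

Lemma cvg_within_comp {T U V : topologicalType} (A : set T) (B : set U)
   (h : T -> U) (k : U -> V) x :
  (forall y, A y -> B (h y)) -> h @ within A (nbhs x) --> h x ->
  k @ within B (nbhs (h x)) --> k (h x) ->
  (k \o h) @ within A (nbhs x) --> k (h x).
Proof.
move=> AB hc kc W HW; have := hc _ (kc W HW).
rewrite /within /= !nbhs_simpl /=.
apply: filterS => y H Ay; exact: H Ay (AB _ Ay).
Qed.

Variable R : realType.

Lemma wc_sub {V : normedModType R} (A : set R) (a b : R -> V) :
  {within A, continuous a} -> {within A, continuous b} ->
  {within A, continuous (fun s => a s - b s)}.
Proof.
move=> /subspace_continuousP ac /subspace_continuousP bc.
apply/subspace_continuousP => x Ax; apply: cvgB; [exact: ac|exact: bc].
Qed.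

Lemma wc_add {V : normedModType R} (A : set R) (a b : R -> V) :
  {within A, continuous a} -> {within A, continuous b} ->
  {within A, continuous (fun s => a s + b s)}.
Proof.
move=> /subspace_continuousP ac /subspace_continuousP bc.
apply/subspace_continuousP => x Ax; apply: cvgD; [exact: ac|exact: bc].
Qed.

Lemma wc_norm {V : normedModType R} (A : set R) (a : R -> V) :
  {within A, continuous a} -> {within A, continuous (fun s => `|a s|)}.
Proof. by move=> ac; exact: (wc_comp ac (@norm_continuous R V)). Qed.

Lemma wc_coord n (A : set R) (a : R -> 'rV[R]_n) i :
  {within A, continuous a} -> {within A, continuous (fun s => a s ord0 i)}.
Proof. by move=> ac; exact: (wc_comp ac (@coord_continuous R 1 n ord0 i)). Qed.

Lemma wc_row n (A : set R) (F : 'I_n -> R -> R) :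
  (forall i, {within A, continuous (F i)}) ->
  {within A, continuous (fun s => \row_(i < n) F i s)}.
Proof.
move=> Fc; apply/subspace_continuousP => x Ax.
apply/cvgrPdist_lt => e e0.
have : \forall s \near within A (nbhs x), forall i, `|F i x - F i s| < e / 2.
  apply: filter_forall => i.
  have /subspace_continuousP /(_ x Ax) := Fc i.
  by move/cvgrPdist_lt; apply; rewrite divr_gt0.
apply: filterS => s H.
apply: (@le_lt_trans _ _ (e / 2)); last by rewrite ltr_pdivrMr // ltr_pMr // ltr1n.
apply: norm_le_coord; first by rewrite ltW // divr_gt0.
by move=> i; rewrite !mxE; exact: ltW.
Qed.

Lemma wc_integrable (h : R -> R) t : {within `[0, 1], continuous h} ->
  0 <= t -> t <= 1 ->
  (@lebesgue_measure R).-integrable `[0, t] (EFin \o h).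
Proof.
move=> hc t0 t1; apply: continuous_compact_integrable; first exact: segment_compact.
apply: continuous_subspaceW hc; apply: subset_itvl; by rewrite bnd_simp.
Qed.

Lemma wc_rint (h : R -> R) : {within `[0, 1], continuous h} ->
  {within `[0, 1], continuous (fun t => rint h 0 t)}.
Proof.
move=> hc; apply: (@parameterized_integral_continuous R 0 1 h) => //.
exact: wc_integrable.
Qed.

End Cont.
Section Gronwall.
Variable R : realType.

Lemma wc_pow k : {within `[0, 1], continuous (fun s : R => s ^+ k)}.
Proof. by apply: continuous_subspaceT; exact: exprn_continuous. Qed.

Lemma rint_pow k (t : R) : 0 <= t ->
  rint (fun s => s ^+ k) 0 t = t ^+ k.+1 / k.+1%:R.
Proof.
rewrite le_eqVlt => /predU1P[<-|t0].
  by rewrite /rint set_itv1 Rintegral_set1 expr0n /= mul0r.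
rewrite /rint /Rintegral.
rewrite (@continuous_FTC2 _ _ (fun x => x ^+ k.+1 / k.+1%:R)) //=.
- by rewrite expr0n /= mul0r subr0.
- by apply: continuous_subspaceT; exact: exprn_continuous.
- split.
  + by move=> y _; apply: derivableM => //; exact: exprn_derivable.
  + apply: cvg_at_right_filter; apply: cvgM; last exact: cvg_cst.
    exact: exprn_continuous.
  + apply: cvg_at_left_filter; apply: cvgM; last exact: cvg_cst.
    exact: exprn_continuous.
- move=> x _; rewrite derive1Mr; last exact: exprn_derivable.
  by rewrite exp_derive1 /= -mulr_natl [_ *: _]mulrC -mulrA divff ?mulr1 // pnatr_eq0.
Qed.

Lemma gronwall (u : nat -> R -> R) (M c : R) :
  0 <= c -> (forall k, {within `[0, 1], continuous (u k)}) ->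
  (forall t, 0 <= t -> t <= 1 -> u 0%N t <= M) ->
  (forall k t, 0 <= t -> t <= 1 -> u k.+1 t <= c * rint (u k) 0 t) ->
  forall k t, 0 <= t -> t <= 1 -> u k t <= M * (c * t) ^+ k / k`!%:R.
Proof.
move=> c0 uc u0 uS; elim => [|k IH] t t0 t1.
  by rewrite expr0 mulr1 fact0 divr1; exact: u0.
apply: (le_trans (uS _ _ t0 t1)).
have -> : M * (c * t) ^+ k.+1 / k.+1`!%:R
   = c * ((M * c ^+ k / k`!%:R) * (t ^+ k.+1 / k.+1%:R)).
  rewrite factS natrM exprMn exprS.
  have h1 : (k`!%:R : R) != 0 by rewrite pnatr_eq0 -lt0n fact_gt0.
  have h2 : (k.+1%:R : R) != 0 by rewrite pnatr_eq0.
  rewrite invfM; field.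
  by rewrite h1 andbT addrC natr1.
apply: ler_wpM2l => //.
rewrite -rint_pow //.
rewrite /rint -RintegralZl //; last exact: wc_integrable (wc_pow k) t0 t1.
apply: le_Rintegral => //.
- exact: wc_integrable (uc k) t0 t1.
- apply: wc_integrable _ t0 t1.
  apply: continuous_subspaceT => x; apply: cvgM; first exact: cvg_cst.
  exact: exprn_continuous.
- move=> s /=; rewrite in_itv /= => /andP[s0 st].
  apply: (le_trans (IH s s0 (le_trans st t1))).
  by rewrite le_eqVlt; apply/orP; left; apply/eqP; rewrite exprMn; ring.
Qed.

End Gronwall.
Section Seqs.
Variable R : realType.

Lemma lim_bound {V : normedModType R} (w : nat -> V) L z B k :
  w @ \oo --> L -> (forall m, (k <= m)%N -> `|w m - z| <= B) -> `|L - z| <= B.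
Proof.
move=> hw H; rewrite leNgt; apply/negP => HB.
have e0 : 0 < `|L - z| - B by rewrite subr_gt0.
have [N _ HN] := (cvgrPdist_lt _ _).1 hw _ e0.
have := HN (maxn N k) (leq_maxl _ _) => /= h1.
have h2 := H (maxn N k) (leq_maxr _ _).
have := ler_distD (w (maxn N k)) L z.
by rewrite leNgt; move/negP; apply; rewrite -(subrK B (`|L - z|)) ltr_leD.
Qed.

Lemma tele_bound {V : normedModType R} (w : nat -> V) (b : nat -> R) k m :
  (forall j, `|w j.+1 - w j| <= b j) -> (k <= m)%N ->
  `|w m - w k| <= \sum_(k <= j < m) b j.
Proof.
move=> H km; rewrite -telescope_sumr //.
apply: le_trans (ler_norm_sum _ _ _) _; apply: ler_sum => j _; exact: H.
Qed.

Lemma cvg_row {T : Type} {F : set_system T} {FF : Filter F} n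
   (w : T -> 'rV[R]_n) (l : 'I_n -> R) :
  (forall i, (fun m => w m ord0 i) @ F --> l i) -> w @ F --> \row_(i < n) l i.
Proof.
move=> Hc; apply/cvgrPdist_lt => e e0.
have : \forall s \near F, forall i, `|l i - w s ord0 i| < e / 2.
  apply: filter_forall => i.
  by move/cvgrPdist_lt: (Hc i); apply; rewrite divr_gt0.
apply: filterS => s H.
apply: (@le_lt_trans _ _ (e / 2)); last by rewrite ltr_pdivrMr // ltr_pMr // ltr1n.
apply: norm_le_coord; first by rewrite ltW // divr_gt0.
by move=> i; rewrite !mxE; exact: ltW.
Qed.

Lemma cvg_filter_comp {T : Type} {U V : topologicalType} {F : set_system T} {FF : Filter F}
   (B : set U) (h : T -> U) (k : U -> V) h0 :
  (forall y, B (h y)) -> h @ F --> h0 ->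
  k @ within B (nbhs h0) --> k h0 ->
  (k \o h) @ F --> k h0.
Proof.
move=> AB hc kc W HW; have := hc _ (kc W HW).
rewrite /within /= !nbhs_simpl /=.
apply: filterS => y H; exact: H (AB y).
Qed.

Lemma le0_all (x : R) : 0 <= x -> (forall e, 0 < e -> x <= e) -> x = 0.
Proof.
move=> x0 H; apply/eqP; rewrite eq_le x0 andbT leNgt; apply/negP => xp.
have h2 : 0 < x / 2 by rewrite divr_gt0.
have := H _ h2; lra.
Qed.

End Seqs.
Section Main.
Variable R : realType.
Variable n : nat.
Variable K : R -> 'rV[R]_n -> 'rV[R]_n.
Variable g : R -> 'rV[R]_n.
Variable alpha : R.
Hypothesis hK : {within [set p : R * 'rV[R]_n | p.1 \in `[0, 1]],
     continuous (fun p => K p.1 p.2)}.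
Hypothesis hg : {within `[0, 1], continuous g}.
Hypothesis alpha1 : alpha <= 1.

Definition Top (x : R -> 'rV[R]_n) := fun t => g t + vint (fun s => K s (x s)) 0 t.

Hypothesis hP : forall x y : R -> 'rV[R]_n,
     {within `[0, 1], continuous x} -> {within `[0, 1], continuous y} ->
     forall t, t \in `[0, 1] ->
       alpha * enorm (x t - Top x t) <= enorm (x t - y t) ->
       enorm (K t (x t) - K t (y t)) <= enorm (x t - y t).

Let c : R := n%:R + 1.
Let c0 : 0 <= c. Proof. by rewrite addr_ge0. Qed.

Lemma Kx_cont (x : R -> 'rV[R]_n) : {within `[0, 1], continuous x} ->
  {within `[0, 1], continuous (fun s => K s (x s))}.
Proof.
move=> /subspace_continuousP xc; apply/subspace_continuousP => s Is.
apply: (@cvg_within_comp _ _ _ _ [set p : R * 'rV[R]_n | p.1 \in `[0, 1]]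
          (fun s => (s, x s)) (fun p => K p.1 p.2)).
- by move=> y Iy /=.
- apply: (@cvg_pair _ _ _ (within `[0, 1] (nbhs s)) (nbhs s) (nbhs (x s)) _ _ _ (fun s => s) x); first exact: cvg_within.
  exact: xc.
- move/subspace_continuousP : hK; apply => /=; exact: Is.
Qed.

Lemma Top_cont (x : R -> 'rV[R]_n) : {within `[0, 1], continuous x} ->
  {within `[0, 1], continuous (Top x)}.
Proof.
move=> xc; rewrite /Top /vint; apply: wc_add => //.
apply: wc_row => i; apply: wc_rint; apply: wc_coord; exact: Kx_cont.
Qed.

Lemma Top_diff (x y : R -> 'rV[R]_n) t : {within `[0, 1], continuous x} ->
  {within `[0, 1], continuous y} -> 0 <= t -> t <= 1 ->
  `|Top x t - Top y t| <= rint (fun s => `|K s (x s) - K s (y s)|) 0 t.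
Proof.
move=> xc yc t0 t1; rewrite /Top opprD addrACA subrr add0r.
apply: norm_le_coord.
  by apply: Rintegral_ge0 => s _.
move=> i; rewrite /vint !mxE /rint -RintegralB //; last 2 first.
- by apply: wc_integrable t0 t1; apply: wc_coord; exact: Kx_cont.
- by apply: wc_integrable t0 t1; apply: wc_coord; exact: Kx_cont.
apply: le_trans (le_normr_Rintegral _ _) _ => //.
  apply: wc_integrable t0 t1; apply: wc_sub; apply: wc_coord; exact: Kx_cont.
apply: le_Rintegral => //.
- apply: wc_integrable t0 t1; apply: wc_norm.
  apply: wc_sub; apply: wc_coord; exact: Kx_cont.
- apply: wc_integrable t0 t1; apply: wc_norm.
  apply: wc_sub; exact: Kx_cont.
- move=> s _; have := @coord_le_norm R n (K s (x s) - K s (y s)) i.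
  by rewrite !mxE.
Qed.

Notation C x := {within `[0, 1], continuous x}.

Lemma nonexp (x y : R -> 'rV[R]_n) t : C x -> C y -> 0 <= t -> t <= 1 ->
  alpha * enorm (x t - Top x t) <= enorm (x t - y t) ->
  `|K t (x t) - K t (y t)| <= c * `|x t - y t|.
Proof.
move=> xc yc t0 t1 H.
apply: le_trans (@norm_le_enorm R n _) _; apply: le_trans (@enorm_le R n _).
by apply: hP => //; rewrite in_itv /= t0 t1.
Qed.

Lemma Kdiff_int (x y : R -> 'rV[R]_n) t : C x -> C y -> 0 <= t -> t <= 1 ->
  (forall s, 0 <= s -> s <= t -> `|K s (x s) - K s (y s)| <= c * `|x s - y s|) ->
  `|Top x t - Top y t| <= c * rint (fun s => `|x s - y s|) 0 t.
Proof.
move=> xc yc t0 t1 H; apply: le_trans (@Top_diff x y t xc yc t0 t1) _.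
rewrite /rint -RintegralZl //; last first.
  by apply: wc_integrable t0 t1; apply: wc_norm; apply: wc_sub.
apply: le_Rintegral => //.
- apply: wc_integrable t0 t1; apply: wc_norm.
  by apply: wc_sub; exact: Kx_cont.
- apply: wc_integrable t0 t1.
  apply: (@wc_comp _ _ _ _ (fun s => `|x s - y s|) ( *%R c)).
    by apply: wc_norm; apply: wc_sub.
  by move=> z; apply: cvgM; [exact: cvg_cst|exact: cvg_id].
- move=> s /=; rewrite in_itv /= => /andP[s0 st]; exact: H.
Qed.

Definition xs k := iter k Top (fun _ => 0).

Lemma xs_cont k : C (xs k).
Proof.
elim: k => [|k IH]; first by apply: continuous_subspaceT; exact: cst_continuous.
exact: Top_cont.
Qed.

Definition u k t := `|xs k.+1 t - xs k t|.

Lemma u_cont k : C (u k).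
Proof. by apply: wc_norm; apply: wc_sub; exact: xs_cont. Qed.

Lemma u_step k t : 0 <= t -> t <= 1 -> u k.+1 t <= c * rint (u k) 0 t.
Proof.
move=> t0 t1; rewrite /u.
apply: (@Kdiff_int (xs k.+1) (xs k)) => //; try exact: xs_cont.
move=> s s0 st; rewrite distrC [`|xs _ s - _|]distrC.
apply: nonexp => //; try exact: xs_cont.
  exact: le_trans st t1.
by apply: ler_piMl => //; exact: enorm_ge0.
Qed.

Lemma M0_ex : exists2 M, 0 <= M & forall t, 0 <= t -> t <= 1 -> u 0%N t <= M.
Proof.
have [t0 It0 Ht] := EVT_max (@ler01 R) (u_cont 0).
exists (u 0%N t0); first exact: normr_ge0.
by move=> t h0 h1; apply: Ht; rewrite in_itv /= h0 h1.
Qed.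

Let M0 := projT1 (cid2 M0_ex).
Let M0_ge0 : 0 <= M0. Proof. exact: (projT2 (cid2 M0_ex)).1. Qed.
Let M0_bd : forall t, 0 <= t -> t <= 1 -> u 0%N t <= M0.
Proof. exact: (projT2 (cid2 M0_ex)).2. Qed.

Definition a : R ^nat := M0 *: exp_coeff c.
Lemma aE k : a k = M0 * exp_coeff c k. Proof. by []. Qed.
Lemma a_ge0 k : 0 <= a k.
Proof. by rewrite aE mulr_ge0 // exp_coeff_ge0. Qed.

Lemma u_le_a k t : 0 <= t -> t <= 1 -> u k t <= a k.
Proof.
move=> t0 t1; apply: le_trans (@gronwall R u M0 c c0 u_cont M0_bd u_step k t t0 t1) _.
rewrite aE /exp_coeff /= -!mulrA ler_wpM2l // ler_wpM2r //.
apply: lerXn2r; rewrite ?nnegrE ?mulr_ge0 //.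
by rewrite ler_piMr.
Qed.

Lemma cvg_a : cvgn (series a).
Proof. exact: is_cvg_seriesZ (is_cvg_series_exp_coeff c). Qed.

Let S := limn (series a).
Definition tail k := S - series a k.

Lemma series_a_mono i j : (i <= j)%N -> series a i <= series a j.
Proof.
by move=> ij; rewrite -subr_ge0 sub_series_geq //; apply: sumr_ge0 => k _; exact: a_ge0.
Qed.

Lemma tail_ge0 k : 0 <= tail k.
Proof.
rewrite subr_ge0; apply: nondecreasing_cvgn_le; last exact: cvg_a.
by move=> i j; exact: series_a_mono.
Qed.

Lemma tail_mono k m : (k <= m)%N -> tail m <= tail k.
Proof. by move=> km; rewrite lerD2l lerN2 series_a_mono. Qed.

Lemma sum_a_tail k m : (k <= m)%N -> \sum_(k <= j < m) a j <= tail k.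
Proof.
move=> km; rewrite -sub_series_geq // lerD2r.
apply: nondecreasing_cvgn_le; last exact: cvg_a.
by move=> i j; exact: series_a_mono.
Qed.

Lemma tail_small e : 0 < e -> exists k, tail k < e.
Proof.
move=> e0; have [N _ HN] := (cvgrPdist_lt _ _).1 cvg_a _ e0.
exists N; rewrite /tail /S; exact: le_lt_trans (ler_norm _) (HN N (leqnn N)).
Qed.

Lemma xs_bound k m t : 0 <= t -> t <= 1 -> (k <= m)%N ->
  `|xs m t - xs k t| <= tail k.
Proof.
move=> t0 t1 km; apply: le_trans _ (@sum_a_tail k m km).
apply: (@tele_bound R _ (fun j => xs j t)) => // j.
exact: u_le_a.
Qed.

Lemma comp_cvg t i : 0 <= t -> t <= 1 -> cvgn (fun m => xs m t ord0 i).
Proof.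
move=> t0 t1.
pose v j := xs j.+1 t ord0 i - xs j t ord0 i.
have hv : cvgn (series v).
  apply: normed_cvg.
  apply: (@series_le_cvg R (fun j => `|v j|) a) => //.
  - by move=> j; exact: a_ge0.
  - move=> j; apply: le_trans _ (@u_le_a j t t0 t1); rewrite /v /u.
    by have := @coord_le_norm R n (xs j.+1 t - xs j t) i; rewrite !mxE.
  - exact: cvg_a.
have -> : (fun m => xs m t ord0 i) = (fun m => xs 0%N t ord0 i + series v m).
  apply/funext => m; rewrite seriesEnat /= telescope_sumr //.
  by rewrite addrC subrK.
by apply: is_cvgD => //; exact: is_cvg_cst.
Qed.

Definition xstar t := \row_(i < n) limn (fun m => xs m t ord0 i).

Lemma xs_cvg t : 0 <= t -> t <= 1 -> (fun m => xs m t) @ \oo --> xstar t.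
Proof. move=> t0 t1; apply: cvg_row => i; exact: comp_cvg. Qed.

Lemma xstar_bound k t : 0 <= t -> t <= 1 -> `|xstar t - xs k t| <= tail k.
Proof.
move=> t0 t1; apply: (@lim_bound R _ (fun m => xs m t) _ _ _ k).
  exact: xs_cvg.
by move=> m km; exact: xs_bound.
Qed.

Lemma xstar_cont : C xstar.
Proof.
apply/subspace_continuousP => s0 Is0.
have [s00 s01] : 0 <= s0 /\ s0 <= 1 by move: Is0; rewrite /= in_itv /= => /andP.
apply/cvgrPdist_lt => e e0.
have e3 : 0 < e / 3 by rewrite divr_gt0.
have [k hk] := @tail_small (e / 3) e3.
have := xs_cont k; move/subspace_continuousP => /(_ s0 Is0) /cvgrPdist_lt /(_ _ e3).
move=> H; have HA : \forall x \near within `[0, 1] (nbhs s0), `[0, 1]%classic x by apply: near_withinT.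
apply: filterS2 HA H => s Is H.
have [s0' s1'] : 0 <= s /\ s <= 1 by move: Is; rewrite /= in_itv /= => /andP.
have b1 := @xstar_bound k s0 s00 s01.
have b2 := @xstar_bound k s s0' s1'.
have := ler_distD (xs k s0) (xstar s0) (xstar s).
have := ler_distD (xs k s) (xs k s0) (xstar s).
rewrite [`|xs k s - xstar s|]distrC.
move: H; rewrite /from_subspace => H.
lra.
Qed.

Lemma K_cvg s : 0 <= s -> s <= 1 ->
  (fun m => K s (xs m s)) @ \oo --> K s (xstar s).
Proof.
move=> s0 s1.
have Is : s \in `[0, 1] by rewrite in_itv /= s0 s1.
apply: (@cvg_filter_comp _ _ _ _ _ [set p : R * 'rV[R]_n | p.1 \in `[0, 1]]
          (fun m => (s, xs m s)) (fun p => K p.1 p.2) (s, xstar s)).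
- by move=> m /=.
- apply: (@cvg_pair _ _ _ \oo (nbhs s) (nbhs (xstar s)) _ _ _ (fun _ => s) (fun m => xs m s)).
    exact: cvg_cst.
  exact: xs_cvg.
- by move/subspace_continuousP : hK; apply.
Qed.

Lemma K_bound k s : 0 <= s -> s <= 1 ->
  `|K s (xstar s) - K s (xs k s)| <= c * tail k.
Proof.
move=> s0 s1; apply: (@lim_bound R _ (fun m => K s (xs m s)) _ _ _ k).
  exact: K_cvg.
move=> m km.
apply: le_trans (_ : \sum_(k <= j < m) (c * a j) <= _).
  apply: (@tele_bound R _ (fun j => K s (xs j s))) => // j.
  apply: le_trans (_ : c * u j s <= _).
    rewrite distrC /u [`|xs j.+1 s - _|]distrC; apply: nonexp => //; try exact: xs_cont.
    by apply: ler_piMl => //; exact: enorm_ge0.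
  by apply: ler_wpM2l => //; exact: u_le_a.
by rewrite -mulr_sumr; apply: ler_wpM2l => //; exact: sum_a_tail.
Qed.

Lemma rint_cst (r t : R) : 0 <= t -> rint (fun _ => r) 0 t = r * t.
Proof.
move=> t0; rewrite /rint Rintegral_cst //.
have := @lebesgue_measure_itv R `[0, t]; rewrite /= => ->.
case: ifPn; rewrite lte_fin => h.
  by rewrite /= subr0.
by have -> : t = 0 by apply/eqP; rewrite eq_le t0 andbT leNgt.
Qed.

Lemma xstar_fixed t : 0 <= t -> t <= 1 -> xstar t = Top xstar t.
Proof.
move=> t0 t1; apply/eqP; rewrite -subr_eq0 -normr_eq0; apply/eqP.
apply: le0_all => // e e0.
have ce : 0 < e / (c + 1) by rewrite divr_gt0 // ltr_wpDl.
have [k hk] := @tail_small _ ce.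
have h1 : `|Top xstar t - xs k.+1 t| <= c * tail k.
  apply: le_trans (@Top_diff xstar (xs k) t xstar_cont (xs_cont k) t0 t1) _.
  apply: le_trans (_ : rint (fun _ => c * tail k) 0 t <= _).
    apply: le_Rintegral => //.
    - apply: wc_integrable t0 t1; apply: wc_norm; apply: wc_sub; first by have := @Kx_cont xstar xstar_cont.
      by have := @Kx_cont (xs k) (xs_cont k).
    - by apply: wc_integrable t0 t1; apply: continuous_subspaceT; exact: cst_continuous.
    - move=> s /=; rewrite in_itv /= => /andP[s0 st]; apply: K_bound => //.
      exact: le_trans st t1.
  rewrite rint_cst // ler_piMr // mulr_ge0 //; exact: tail_ge0.
have h2 : `|xstar t - xs k.+1 t| <= tail k.
  apply: le_trans (@xstar_bound k.+1 t t0 t1) _; exact: tail_mono.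
have := ler_distD (xs k.+1 t) (xstar t) (Top xstar t).
rewrite [`|xs k.+1 t - Top xstar t|]distrC => h3.
apply: le_trans h3 _.
have hk' : (c + 1) * tail k <= e.
  by rewrite mulrC -ler_pdivlMr ?ltW // ltr_wpDl.
have := tail_ge0 k. nra.
Qed.

Lemma enorm0 : enorm (0 : 'rV[R]_n) = 0.
Proof.
rewrite /enorm big1 ?sqrtr0 // => i _; by rewrite mxE expr0n.
Qed.

Lemma uniq_sol (y : R -> 'rV[R]_n) : C y ->
  (forall t, 0 <= t -> t <= 1 -> y t = Top y t) ->
  forall t, 0 <= t -> t <= 1 -> y t = xstar t.
Proof.
move=> yc yfix.
have wc : C (fun t => `|y t - xstar t|) by apply: wc_norm; apply: wc_sub => //; exact: xstar_cont.
have [t0 It0 Ht] := EVT_max (@ler01 R) wc.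
set M := `|y t0 - xstar t0|.
have step : forall k t, 0 <= t -> t <= 1 ->
    (fun _ : nat => fun t => `|y t - xstar t|) k.+1 t <=
    c * rint ((fun _ : nat => fun t => `|y t - xstar t|) k) 0 t.
  move=> k t h0 h1 /=; rewrite yfix // xstar_fixed //.
  apply: Kdiff_int => //; first exact: xstar_cont.
  move=> s s0 st; apply: nonexp => //; first exact: xstar_cont.
    exact: le_trans st h1.
  rewrite -yfix ?subrr ?enorm0 ?mulr0 ?enorm_ge0 //; exact: le_trans st h1.
have I01 : forall t : R, 0 <= t -> t <= 1 -> t \in `[0, 1].
  by move=> s s0 s1; rewrite in_itv /= s0 s1.
have gr := @gronwall R (fun _ : nat => fun t => `|y t - xstar t|) M c c0
  (fun _ => wc) (fun t h0 h1 => Ht t (I01 t h0 h1)) step.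
move=> t h0 h1; apply/eqP; rewrite -subr_eq0 -normr_eq0; apply/eqP.
apply: le0_all => // e e0.
have M0' : 0 <= M by exact: normr_ge0.
have e1 : 0 < e / (M + 1) by rewrite divr_gt0 // ltr_wpDl.
have /cvg_series_cvg_0 /cvgrPdist_lt /(_ _ e1) [N _ HN] := is_cvg_series_exp_coeff c.
have hN := HN N (leqnn N); rewrite /= sub0r normrN in hN.
have hN' : exp_coeff c N <= e / (M + 1).
  by apply: ltW; apply: le_lt_trans hN; exact: ler_norm.
apply: le_trans (gr N t h0 h1) _.
have hc : M * (c * t) ^+ N / N`!%:R <= M * exp_coeff c N.
  rewrite /exp_coeff /= -!mulrA ler_wpM2l // ler_wpM2r ?invr_ge0 //.
  apply: lerXn2r; rewrite ?nnegrE ?mulr_ge0 //.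
  by rewrite ler_piMr.
apply: le_trans hc _.
have : M * exp_coeff c N <= M * (e / (M + 1)) by apply: ler_wpM2l.
move=> h; apply: le_trans h _.
rewrite mulrA ler_pdivrMr; last lra.
nra.
Qed.

End Main.
Arguments Top {R n}.
Arguments xstar {R n}.

Theorem theorem4p6 (R : realType) (n : nat)
  (K : R -> 'rV[R]_n -> 'rV[R]_n) (g : R -> 'rV[R]_n) (f : R -> R)
  (alpha : R) (psi phi : R -> R) (F : R -> R -> R) :
  {within [set p : R * 'rV[R]_n | p.1 \in `[0, 1]],
     continuous (fun p => K p.1 p.2)} ->
  {within `[0, 1], continuous g} ->
  (forall l, 0 <= l -> 0 < f l) ->
  (forall a, 0 <= a -> (@lebesgue_measure R).-integrable `[0, a] (EFin \o f)) ->
  (forall e, 0 < e -> 0 < rint f 0 e) ->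
  0 < alpha -> alpha <= 1 / 2 ->
  Psi_class psi -> Phi_u phi -> C_class F ->
  (forall x y : R -> 'rV[R]_n,
     {within `[0, 1], continuous x} -> {within `[0, 1], continuous y} ->
     forall t, t \in `[0, 1] ->
       alpha * enorm (x t - g t - vint (fun s => K s (x s)) 0 t) <= enorm (x t - y t) ->
       psi (rint f 0 (enorm (K t (x t) - K t (y t))))
         <= F (psi (rint f 0 (enorm (x t - y t))))
              (phi (rint f 0 (enorm (x t - y t))))) ->
  exists x : R -> 'rV[R]_n,
    [/\ {within `[0, 1], continuous x},
        (forall t, t \in `[0, 1] -> x t = g t + vint (fun s => K s (x s)) 0 t) &
        (forall y : R -> 'rV[R]_n, {within `[0, 1], continuous y} ->
           (forall t, t \in `[0, 1] -> y t = g t + vint (fun s => K s (y s)) 0 t) ->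
           forall t, t \in `[0, 1] -> y t = x t)].
Proof.
move=> hK hg fpos fint fpos2 a0 ahalf hpsi hphi hF H.
have alpha1 : alpha <= 1 by lra.
have hP : forall x y : R -> 'rV[R]_n,
     {within `[0, 1], continuous x} -> {within `[0, 1], continuous y} ->
     forall t, t \in `[0, 1] ->
       alpha * enorm (x t - Top K g x t) <= enorm (x t - y t) ->
       enorm (K t (x t) - K t (y t)) <= enorm (x t - y t).
  move=> x y xc yc t It hc.
  apply: (@key_ineq R f fpos fint psi phi F fpos2 hpsi hphi hF) => //; try exact: enorm_ge0.
  apply: H => //.
  by move: hc; rewrite /Top opprD addrA.
exists (xstar K g); split.
- exact: (@xstar_cont R n K g alpha hK hg alpha1 hP).
- move=> t; rewrite in_itv /= => /andP[t0 t1].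
  exact: (@xstar_fixed R n K g alpha hK hg alpha1 hP t t0 t1).
- move=> y yc yfix t; rewrite in_itv /= => /andP[t0 t1].
  apply: (@uniq_sol R n K g alpha hK hg alpha1 hP y yc) => // s s0 s1.
  by apply: yfix; rewrite in_itv /= s0 s1.
Qed.
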